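(* Let $m\ge1$, $C_m$ cyclic with generator $c$, and for $d\mid m$ let $\zeta_d$ be a primitive $d$th root of unity. Consider the Wedderburn isomorphism $\omega_{\mathbb{Q},m}\colon\mathbb{Q}C_m\to\prod_{d\mid m}\mathbb{Q}(\zeta_d)$, $c\mapsto(\zeta_d)_{d\mid m}$. Given, for each $d\mid m$, an element $a_d(c)=\sum_{i\in\mathbb{Z}/m}a_{d,i}c^i\in\mathbb{Q}C_m$, write $a_d(\zeta_d)=\sum_{i\in\mathbb{Z}/m}a_{d,i}\zeta_d^i$. Then \[ \omega_{\mathbb{Q},m}^{-1}\bigl((a_d(\zeta_d))_{d\mid m}\bigr)=\frac1m\sum_{l\in\mathbb{Z}/m}c^l\Bigl[\sum_{d\mid m}d\sum_{k\in\mathbb{Z}/(m/d')}a_{d,\,l-kd'}\prod_{p\mid d,\ p\nmid k}\Bigl(-\frac1p\Bigr)\prod_{p\mid d,\ p\mid k}\Bigl(1-\frac1p\Bigr)\Bigr], \] where for $d\mid m$ the divisor $d'\mid m$ is defined by $v_p(d')=\max(v_p(d)-1,0)$ for all primes $p$, and the products run over primes $p$.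
   Context: $v_p$ is the $p$-adic valuation. For $p\mid d$ one has $p\mid m/d'$, so divisibility of $k\in\mathbb{Z}/(m/d')$ by $p$ is well defined, and $l-kd'$ is well defined in $\mathbb{Z}/m$. *)

(* Defs.v *)
From HB Require Import structures.
From mathcomp Require Import all_boot all_order all_algebra all_field.
Set Implicit Arguments. Unset Strict Implicit. Unset Printing Implicit Defensive.
Import Order.TTheory GRing.Theory Num.Theory.
Local Open Scope ring_scope.

(* An element of the group algebra Q C_m is represented by its coefficient
   function  i |-> coefficient of c^i, for i in Z/m = {0,...,m-1}
   (only the values at i < m are used). *)

(* Component at d of the Wedderburn map omega_{Q,m} : Q C_m -> prod_{d|m} Q(zeta_d),
   c |-> (zeta_d)_d, where zeta d is the chosen primitive d-th root of unity
   (Q(zeta_d) is viewed inside algC). *)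
Definition omega_comp (m : nat) (zeta : nat -> algC) (y : nat -> rat) (d : nat)
  : algC := \sum_(i < m) ratr (y i) * zeta d ^+ i.

Definition dprime (d : nat) : nat := \prod_(p <- primes d) p ^ (logn p d - 1).

(* The right-hand side of the formula: coefficient of c^l, l in Z/m.
   The index l - k d' in Z/m is represented by (l + m - k d') mod m
   (note k d' < m since k < m/d'). *)
Definition inv_formula (m : nat) (a : nat -> nat -> rat) (l : nat) : rat :=
  m%:R^-1 *
  \sum_(d <- divisors m)
    d%:R * \sum_(k < m %/ dprime d)
       a d ((l + m - k * dprime d) %% m)%N
       * \prod_(p <- primes d | ~~ (p %| k)%N) (- p%:R^-1)
       * \prod_(p <- primes d | (p %| k)%N) (1 - p%:R^-1).

(* Main.v *)
Require Import Defs.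
From HB Require Import structures.
From mathcomp Require Import all_boot all_order all_algebra all_field.
From mathcomp Require Import ring.
Import Order.TTheory GRing.Theory Num.Theory.
Local Open Scope ring_scope.

Lemma dprimeQ d : (0 < d)%N -> (dprime d * \prod_(p <- primes d) p)%N = d.
Proof.
move=> d0; rewrite /dprime -big_split /=.
rewrite [RHS]prod_prime_decomp // prime_decompE big_map /=.
apply: eq_big_seq => p; rewrite -logn_gt0 => lt.
by rewrite subn1 -expnSr prednK.
Qed.

Definition Fp (s : seq nat) (k : nat) : algC :=
  \prod_(p <- s) ((p %| k)%:R - p%:R^-1).
Definition Kb (d0 : nat) (s : seq nat) (e : nat) : bool :=
  (d0 %| e * \prod_(p <- s) p)%N &&
  all (fun q => ~~ (q %| (e * \prod_(p <- s) p) %/ d0))%N s.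

Lemma Kb_step d0 p s e : prime p -> p \notin s -> all prime s -> (0 < d0)%N ->
  (Kb d0 (p :: s) e + Kb d0 s e)%N = Kb d0 s (p * e).
Proof.
move=> pp ps aps d0p; rewrite /Kb big_cons.
set Q := (\prod_(q <- s) q)%N.
rewrite mulnCA -mulnA.
set R := (e * Q)%N.
have Hq : {in s, forall q x, (q %| p * x) = (q %| x)}%N.
  move=> q qs x; rewrite Euclid_dvdM; last by move/allP: aps => /(_ q qs).
  rewrite dvdn_prime2 //; last by move/allP: aps => /(_ q qs).
  have qnp : q != p by apply: contraNneq ps => <-.
  by rewrite (negbTE qnp).
case dR: (d0 %| R)%N.
  move/dvdnP: dR => [r ->].
  rewrite mulnA !mulnK // dvdn_mull //= dvdn_mulr //=.
  have -> : all (fun q => ~~ (q %| p*r))%N s = all (fun q => ~~ (q %| r))%N s.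
    by apply: eq_in_all => q qs; rewrite Hq.
  by [].
rewrite /= addn0; case dpR: (d0 %| p * R)%N => //=.
move/dvdnP: dpR => [t tE]; rewrite tE mulnK //.
case pt: (p %| t)%N => //=.
move/dvdnP: pt => [u uE]; move: tE; rewrite uE [(u * p)%N]mulnC -mulnA => /eqP.
rewrite eqn_pmul2l ?prime_gt0 // => /eqP RE.
by rewrite RE dvdn_mull in dR.
Qed.
Lemma sum_mult (p M : nat) (g : nat -> algC) : (0 < p)%N ->
  \sum_(0 <= k < M * p) (if (p %| k)%N then g k else 0) = \sum_(0 <= t < M) g (t * p)%N.
Proof.
move=> p0; rewrite big_nat_mul; apply: eq_bigr => i _.
rewrite big_ltn; last by rewrite ltn_pmul2r.
rewrite dvdn_mull // big1_seq ?Monoid.simpm // => j /andP [_].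
rewrite mem_index_iota => /andP [lo hi].
case: ifP => // /dvdnP [q qE]; exfalso.
move: lo hi; rewrite qE ltn_pmul2r // ltn_pmul2r // => lo hi.
by move: (leq_ltn_trans lo hi); rewrite ltnn.
Qed.

Lemma Fp_mul s p t : all prime s -> prime p -> p \notin s ->
  Fp s (t * p)%N = Fp s t.
Proof.
move=> aps pp ps; apply: eq_big_seq => q qs.
have qp : prime q by move/allP: aps => /(_ q qs).
rewrite Euclid_dvdM // [(q %| p)%N]dvdn_prime2 //.
have qnp : q != p by apply: contraNneq ps => <-.
by rewrite (negbTE qnp) orbF.
Qed.

Lemma keyG (z : algC) d0 m (hz : d0.-primitive_root z) (hd0 : (d0 %| m)%N) s :
  uniq s -> all prime s -> forall N e, all (fun p => p %| N)%N s -> (e * N)%N = m ->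
  (\sum_(0 <= k < N) Fp s k * z ^+ (k * e)) * (\prod_(p <- s) p)%:R
    = N%:R * (Kb d0 s e)%:R.
Proof.
have zm : z ^+ m = 1 by apply/eqP; rewrite -(prim_order_dvd hz).
have d0p : (0 < d0)%N by apply: prim_order_gt0 hz.
elim: s => [|p s IH] us aps N e aN eN.
  rewrite big_nil mulr1 /Kb big_nil /= muln1 andbT.
  under eq_bigr do rewrite /Fp big_nil mul1r mulnC exprM.
  case: (boolP (d0 %| e)%N) => de.
    rewrite (prim_order_dvd hz) in de; rewrite (eqP de) mulr1.
    under eq_bigr do rewrite expr1n.
    by rewrite big_const_nat subn0 iter_addr_0.
  rewrite mulr0.
  have y1 : z ^+ e - 1 != 0 by rewrite subr_eq0 -(prim_order_dvd hz).
  have := subrX1 (z ^+ e) N.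
  rewrite -exprM eN zm subrr big_mkord => /esym /eqP.
  by rewrite mulf_eq0 (negbTE y1) /= => /eqP.
move: us aps aN => /= /andP [ps us] /andP [pp aps] /andP [pN aN].
have p0 : (0 < p)%N by apply: prime_gt0.
have NE : N = (N %/ p * p)%N by rewrite divnK.
have aN' : all (fun q => q %| N %/ p)%N s.
  apply/allP => q qs; have qp : prime q by move/allP: aps => /(_ q qs).
  have qnp : q != p by apply: contraNneq ps => <-.
  have cqp : coprime q p by rewrite prime_coprime // dvdn_prime2 // (negbTE qnp).
  move/allP: aN => /(_ q qs) qN.
  by rewrite -(@Gauss_dvdl _ _ p) // divnK.
have eN' : (p * e * (N %/ p))%N = m by rewrite -eN [(p * e)%N]mulnC -mulnA [(p * _)%N]mulnC divnK.
have IH1 := IH us aps _ _ aN' eN'.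
have IH2 := IH us aps _ _ aN eN.
have -> : \sum_(0 <= k < N) Fp (p :: s) k * z ^+ (k * e) =
   \sum_(0 <= k < N) (if (p %| k)%N then Fp s k * z ^+ (k * e) else 0)
   - p%:R^-1 * \sum_(0 <= k < N) Fp s k * z ^+ (k * e).
  rewrite mulr_sumr -sumrB; apply: eq_bigr => k _.
  rewrite /Fp big_cons; case: ifP => _; rewrite ?mulr1n ?mulr0n; ring.
rewrite [in X in X - _]NE sum_mult //.
rewrite (eq_bigr (fun t => Fp s t * z ^+ (t * (p * e)))); last first.
  by move=> i _; rewrite Fp_mul // mulnA.
rewrite big_cons natrM mulrBl.
set A := \sum_(0 <= i < N %/ p) _.
set B := \sum_(0 <= i < N) _.
have pnz : (p%:R : algC) != 0 by rewrite pnatr_eq0 -lt0n.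
have -> : A * (p%:R * (\prod_(j <- s) j)%:R) = p%:R * (A * (\prod_(j <- s) j)%:R).
  by rewrite mulrCA.
have -> : p%:R^-1 * B * (p%:R * (\prod_(j <- s) j)%:R) = B * (\prod_(j <- s) j)%:R.
  by rewrite -mulrA mulrCA mulKf.
rewrite IH1 IH2 -(Kb_step d0 p s e pp ps aps d0p) natrD.
rewrite mulrA -natrM mulnC -NE; ring.
Qed.

Lemma key_final (z : algC) d0 m d (hz : d0.-primitive_root z) (hd0 : (d0 %| m)%N)
  (hd : (d %| m)%N) (hm : (0 < m)%N) :
  d%:R * \sum_(k < m %/ dprime d) Fp (primes d) k * z ^+ (k * dprime d)
  = m%:R * (d == d0)%:R.
Proof.
have dp : (0 < d)%N by apply: dvdn_gt0 hd.
have DQ := dprimeQ d dp.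
set d' := dprime d in DQ *; set Q := (\prod_(p <- primes d) p)%N in DQ.
have d'm : (d' %| m)%N by apply: dvdn_trans hd; rewrite -DQ dvdn_mulr.
have aN : all (fun p => p %| m %/ d')%N (primes d).
  apply/allP => p pP; rewrite dvdn_divRL // (dvdn_trans _ hd) // -[X in (_ %| X)%N]DQ mulnC dvdn_pmul2l //.
    by rewrite /Q (big_rem p) //= dvdn_mulr.
  by move: dp; rewrite -DQ muln_gt0 => /andP [].
have eN : (d' * (m %/ d'))%N = m by rewrite mulnC divnK.
have ap : all prime (primes d).
  by apply/allP => p; rewrite mem_primes => /andP [].
have K := keyG z d0 m hz hd0 (primes d) (primes_uniq d) ap (m %/ d') d' aN eN.
rewrite big_mkord in K.
rewrite -/Q in K.
have -> : (d%:R : algC) = d'%:R * Q%:R by rewrite -natrM DQ.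
rewrite -mulrA [_ * (\sum_(_ < _) _)]mulrC K.
rewrite mulrA -natrM eN; congr (_ * (nat_of_bool _)%:R).
rewrite /Kb -/Q DQ.
case: eqP => [<-|ne].
  rewrite dvdnn divnn dp /=; apply/allP => q qP.
  by rewrite dvdn1; move: qP; rewrite mem_primes => /andP [/prime_gt1 q1 _]; rewrite neq_ltn q1 orbT.
apply/negP => /andP [dd /allP al].
set r := (d %/ d0)%N.
have dE : d = (r * d0)%N by rewrite divnK.
have r0 : (0 < r)%N by move: dp; rewrite dE muln_gt0 => /andP [].
case: (ltngtP r 1) => [r1|r1|r1]; first by move: r1 r0; rewrite ltnS leqn0 => /eqP ->.
  have pr : pdiv r \in primes d.
    rewrite mem_primes pdiv_prime // dp /=.
    by apply: dvdn_trans (pdiv_dvd r) _; rewrite dE dvdn_mulr.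
  by move: (al _ pr); rewrite pdiv_dvd.
by apply: ne; rewrite dE r1 mul1n.
Qed.

Lemma shift_sum m (hm : (0 < m)%N) (f : nat -> algC) z (zm : z ^+ m = 1) x
  (hx : (x < m)%N) :
  \sum_(l < m) f ((l + m - x) %% m)%N * z ^+ l = (\sum_(j < m) f j * z ^+ j) * z ^+ x.
Proof.
rewrite mulr_suml.
pose h (j : 'I_m) : 'I_m := Ordinal (ltn_pmod (j + x)%N hm).
rewrite (reindex_inj (h := h)); last first.
  move=> j1 j2 /(congr1 val) /= /eqP.
  rewrite eqn_modDr !modn_small // => /eqP E; exact: val_inj.
apply: eq_bigr => j _ /=.
have -> : (((j + x) %% m + m - x) %% m = j)%N.
  rewrite -addnBA; last exact: ltnW.
  rewrite modnDml -addnA subnKC ?modnDr ?modn_small //; exact: ltnW.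
by rewrite expr_mod // exprD mulrA.
Qed.

Lemma ratr_inv m (a : nat -> nat -> rat) l :
  (ratr (inv_formula m a l) : algC) = m%:R^-1 * \sum_(d <- divisors m) d%:R *
     \sum_(k < m %/ dprime d) ratr (a d ((l + m - k * dprime d) %% m)%N) * Fp (primes d) k.
Proof.
rewrite /inv_formula rmorphM fmorphV rmorph_nat rmorph_sum; apply: (congr2 *%R) => //.
apply: eq_bigr => d _; rewrite rmorphM rmorph_nat rmorph_sum; apply: (congr2 *%R) => //.
apply: eq_bigr => k _; rewrite !rmorphM -mulrA; apply: (congr2 *%R); first by [].
rewrite !rmorph_prod /Fp [RHS](bigID (fun p => p %| k)%N) /= mulrC; apply: (congr2 *%R).
  by apply: eq_bigr => p ->; rewrite rmorphB rmorph1 fmorphV rmorph_nat.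
by apply: eq_bigr => p /negbTE ->; rewrite rmorphN fmorphV rmorph_nat sub0r.
Qed.

Theorem proposition5p3 (m : nat) (hm : (0 < m)%N) (zeta : nat -> algC)
    (hzeta : forall d, (d %| m)%N -> d.-primitive_root (zeta d))
    (a : nat -> nat -> rat) :
  forall d, (d %| m)%N ->
    omega_comp m zeta (inv_formula m a) d = omega_comp m zeta (a d) d.
Proof.
move=> d0 hd0; rewrite /omega_comp.
have hz := hzeta d0 hd0.
set z := zeta d0 in hz *.
have zm : z ^+ m = 1 by apply/eqP; rewrite -(prim_order_dvd hz).
pose Om d := \sum_(j < m) (ratr (a d j) : algC) * z ^+ j.
under eq_bigr do rewrite ratr_inv -mulrA mulr_suml.
rewrite -mulr_sumr exchange_big /=.
rewrite (eq_big_seq (fun d => Om d * (m%:R * (d == d0)%:R))); last first.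
  move=> d; rewrite -dvdn_divisors // => hd.
  rewrite -(key_final z d0 m d hz hd0 hd hm) mulrCA.
  under eq_bigr do rewrite -mulrA; rewrite -mulr_sumr; congr (_ * _).
  under eq_bigr do rewrite mulr_suml; rewrite exchange_big /= mulr_sumr.
  apply: eq_bigr => k _.
  under eq_bigr do rewrite mulrAC.
  have d'p : (0 < dprime d)%N.
    have E := dprimeQ d (dvdn_gt0 hm hd).
    by have := dvdn_gt0 hm hd; rewrite -{1}E muln_gt0 => /andP [].
  have d'm : (dprime d %| m)%N.
    have E := dprimeQ d (dvdn_gt0 hm hd).
    by rewrite (dvdn_trans _ hd) // -{2}E dvdn_mulr.
  have hx : (k * dprime d < m)%N by rewrite -ltn_divRL.
  rewrite -mulr_suml (shift_sum m hm (fun n => ratr (a d n)) z zm _ hx) -/(Om d).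
  by rewrite -mulrA [_ * Fp _ _]mulrC.
rewrite (bigD1_seq d0) ?divisors_uniq -?dvdn_divisors //=.
rewrite eqxx mulr1n mulr1.
rewrite big1 ?addr0; last by move=> d /negbTE ->; rewrite /= mulr0n !mulr0.
rewrite mulrCA mulVf ?mulr1 // pnatr_eq0 -lt0n //.
Qed.
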